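(* Let $D$ be a Newton diagram in $2$ variables whose support $K$ has size $d$, is connected, and contains $(0,0)$. Then $\#(D)\ge\frac{d+5}{2}$.
   Context: For $m\in\mathbb Z^n$ write $|m|=m_1+\dots+m_n$; $e_1,\dots,e_n$ is the standard basis. A Newton diagram in $n$ variables is a function $D\colon\mathbb Z^n\to\{0,P,N\}$ ($P,N$ formal symbols) whose support $K=D^{-1}(\{P,N\})$ is a finite nonempty subset of $\mathbb N_0^n$. For $a\in\mathbb Z^n$ let $E(a)=\{a,a-e_1,\dots,a-e_n\}$; $E(a)$ is a node of $D$ if the image $D(E(a))$ equals $\{P\}$, $\{N\}$, $\{0,P\}$ or $\{0,N\}$. $\#(D)$ is the number of $a\in\mathbb Z^n$ for which $E(a)$ is a node. Two distinct points $m,m'$ are adjacent if $m-m'\in\{\pm e_j\}\cup\{e_j-e_k: j\ne k\}$; $K$ is connected if any two points of $K$ are joined by a path of successively adjacent points of $K$. The size of $K$ is $k-|a|+1$ where $k=\max_{m\in K}|m|$ and $a_j=\min_{m\in K}m_j$. *)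

(* Defs.v *)
From Stdlib Require Import ZArith List Relations.
Import ListNotations.
Open Scope Z_scope.

Inductive sym : Type := S0 | SP | SN.

Definition pt := (Z * Z)%type.

Definition support (D : pt -> sym) (m : pt) : Prop := D m <> S0.

Definition newton_diagram (D : pt -> sym) : Prop :=
  (exists l : list pt, forall m, support D m -> In m l) /\
  (exists m, support D m) /\
  (forall m, support D m -> 0 <= fst m /\ 0 <= snd m).

Definition E (a : pt) : list pt :=
  [a; (fst a - 1, snd a); (fst a, snd a - 1)].

Definition is_node (D : pt -> sym) (a : pt) : Prop :=
  exists S : list sym, In S [[SP]; [SN]; [S0; SP]; [S0; SN]] /\
    forall s, In s (map D (E a)) <-> In s S.

Definition num_nodes (D : pt -> sym) (n : nat) : Prop :=
  exists l : list pt, NoDup l /\ (forall a, is_node D a <-> In a l) /\ length l = n.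

Definition adjacent (m m' : pt) : Prop :=
  m <> m' /\
  In (fst m - fst m', snd m - snd m') [(1,0); (-1,0); (0,1); (0,-1); (1,-1); (-1,1)].

Definition connected_support (D : pt -> sym) : Prop :=
  forall p q, support D p -> support D q ->
    clos_refl_trans pt (fun x y => support D x /\ support D y /\ adjacent x y) p q.

Definition support_size (D : pt -> sym) (d : Z) : Prop :=
  exists k a1 a2 : Z,
    ((exists m, support D m /\ fst m + snd m = k) /\
      forall m, support D m -> fst m + snd m <= k) /\
    ((exists m, support D m /\ fst m = a1) /\
      forall m, support D m -> a1 <= fst m) /\
    ((exists m, support D m /\ snd m = a2) /\
      forall m, support D m -> a2 <= snd m) /\
    d = k - (a1 + a2) + 1.

(* Main.v *)
Require Import Defs.
From Stdlib Require Import ZArith List Relations Lia Bool FinFun.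
Import ListNotations.
Open Scope bool_scope.
Open Scope Z_scope.


Definition nz (c : sym) : bool := match c with S0 => false | _ => true end.
Definition isP (c : sym) : bool := match c with SP => true | _ => false end.
Definition isN (c : sym) : bool := match c with SN => true | _ => false end.
Definition nodeb (a b c : sym) : bool :=
  (nz a || nz b || nz c) && negb ((isP a || isP b || isP c) && (isN a || isN b || isN c)).
Definition sym_eqb (a b : sym) : bool :=
  match a, b with S0, S0 | SP, SP | SN, SN => true | _, _ => false end.

Definition PSt := (option sym * bool)%type.
Definition phi_step (st : PSt) (c : sym) : PSt * Z :=
  match c with
  | S0 => match st with (None, _) => ((None, false), 0) | (Some l, _) => ((Some l, true), 0) end
  | _ => ((Some c, false),
          1 - (match st with (Some l, _) => if sym_eqb l c then 0 else 1 | _ => 0 end)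
            + (match st with (Some _, true) => 1 | _ => 0 end))
  end.

Definition St := (sym * PSt * PSt * bool)%type.
Definition init : St := (S0, (None, false), (None, false), false).

Definition step (st : St) (cu cv : sym) : St * Z :=
  let '(up, pu, pv, cn) := st in
  ((cu, fst (phi_step pu cu), fst (phi_step pv cv), cn || (nz cv && (nz up || nz cu))),
   2 * (if nodeb cv up cu then 1 else 0) + snd (phi_step pv cv) - snd (phi_step pu cu)).
Definition hval (st : St) : Z :=
  match st with (up, (lu, gu), (lv, gv), cn) =>
  match up, lu, gu, lv, gv, cn with
  | S0, None, false, None, false, false => 0
  | S0, None, false, (Some SP), false, false => 3
  | S0, None, false, (Some SP), true, false => 3
  | S0, None, false, (Some SN), false, false => 3
  | S0, None, false, (Some SN), true, false => 3
  | S0, (Some SP), true, None, false, false => 3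
  | S0, (Some SP), true, (Some SP), false, false => 6
  | S0, (Some SP), true, (Some SP), false, true => 2
  | S0, (Some SP), true, (Some SP), true, false => 6
  | S0, (Some SP), true, (Some SP), true, true => 2
  | S0, (Some SP), true, (Some SN), false, false => 6
  | S0, (Some SP), true, (Some SN), false, true => 1
  | S0, (Some SP), true, (Some SN), true, false => 6
  | S0, (Some SP), true, (Some SN), true, true => 1
  | S0, (Some SN), true, None, false, false => 3
  | S0, (Some SN), true, (Some SP), false, false => 6
  | S0, (Some SN), true, (Some SP), false, true => 1
  | S0, (Some SN), true, (Some SP), true, false => 6
  | S0, (Some SN), true, (Some SP), true, true => 1
  | S0, (Some SN), true, (Some SN), false, false => 6
  | S0, (Some SN), true, (Some SN), false, true => 2
  | S0, (Some SN), true, (Some SN), true, false => 6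
  | S0, (Some SN), true, (Some SN), true, true => 2
  | SP, (Some SP), false, None, false, false => 1
  | SP, (Some SP), false, (Some SP), false, true => 1
  | SP, (Some SP), false, (Some SP), true, false => 4
  | SP, (Some SP), false, (Some SP), true, true => 0
  | SP, (Some SP), false, (Some SN), false, true => 0
  | SP, (Some SP), false, (Some SN), true, false => 4
  | SP, (Some SP), false, (Some SN), true, true => 0
  | SN, (Some SN), false, None, false, false => 1
  | SN, (Some SN), false, (Some SP), false, true => 0
  | SN, (Some SN), false, (Some SP), true, false => 4
  | SN, (Some SN), false, (Some SP), true, true => 0
  | SN, (Some SN), false, (Some SN), false, true => 1
  | SN, (Some SN), false, (Some SN), true, false => 4
  | SN, (Some SN), false, (Some SN), true, true => 0
  | _, _, _, _, _, _ => 100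
  end end.

Definition checkb (st : St) (cu cv : sym) : bool :=
  let t := step st cu cv in
  implb (hval st <? 100) ((hval (fst t) <? 100) && (hval (fst t) <=? hval st + snd t)).

Lemma check_ok : forall st cu cv, checkb st cu cv = true.
Proof.
  intros [[[up [lu gu]] [lv gv]] cn] cu cv;
  destruct up, lu as [[]|], gu, lv as [[]|], gv, cn, cu, cv; reflexivity.
Qed.


Lemma fin1_ok : forall pu pv, hval (S0, pu, pv, true) < 100 -> 1 <= hval (S0, pu, pv, true).
Proof.
  intros [lu gu] [lv gv]; destruct lu as [[]|], gu, lv as [[]|], gv; simpl; lia.
Qed.
Lemma fin3_ok : forall lu gu gv cn, hval (S0, (Some lu, gu), (None, gv), cn) < 100 ->
  3 <= hval (S0, (Some lu, gu), (None, gv), cn).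
Proof.
  intros lu gu gv cn; destruct lu, gu, gv, cn; simpl; lia.
Qed.

Definition prevu (u : nat -> sym) (m : nat) : sym :=
  match m with O => S0 | S k => u k end.

Fixpoint phirun (u : nat -> sym) (n : nat) : PSt * Z :=
  match n with
  | O => ((None, false), 0)
  | S m => let p := phirun u m in (fst (phi_step (fst p) (u m)), snd p + snd (phi_step (fst p) (u m)))
  end.

Fixpoint gcount (u v : nat -> sym) (n : nat) : Z :=
  match n with
  | O => 0
  | S m => gcount u v m + (if nodeb (v m) (prevu u m) (u m) then 1 else 0)
  end.

Fixpoint connf (u v : nat -> sym) (n : nat) : bool :=
  match n with
  | O => false
  | S m => connf u v m || (nz (v m) && (nz (prevu u m) || nz (u m)))
  end.

Fixpoint run (u v : nat -> sym) (n : nat) : St * Z :=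
  match n with
  | O => (init, 0)
  | S m => let p := run u v m in
           let q := step (fst p) (u m) (v m) in (fst q, snd p + snd q)
  end.

Lemma run_spec : forall u v n,
  run u v n = ((prevu u n, fst (phirun u n), fst (phirun v n), connf u v n),
               2 * gcount u v n + snd (phirun v n) - snd (phirun u n)).
Proof.
  intros u v n; induction n as [|n IH]; [reflexivity|].
  cbn [run]. rewrite IH. unfold step. cbn [fst snd phirun gcount connf prevu]. f_equal. ring.
Qed.

Lemma run_inv : forall u v n,
  hval (fst (run u v n)) < 100 /\ hval (fst (run u v n)) <= snd (run u v n).
Proof.
  intros u v n; induction n as [|n IH]; [simpl; lia|].
  simpl. destruct IH as [H1 H2].
  pose proof (check_ok (fst (run u v n)) (u n) (v n)) as C.
  unfold checkb in C.
  destruct (hval (fst (run u v n)) <? 100) eqn:E1; [|apply Z.ltb_ge in E1; lia].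
  simpl in C. apply andb_true_iff in C. destruct C as [C1 C2].
  apply Z.ltb_lt in C1. apply Z.leb_le in C2. lia.
Qed.

Lemma key_step : forall u v n,
  connf u v n = true -> prevu u n = S0 ->
  1 <= 2 * gcount u v n + snd (phirun v n) - snd (phirun u n).
Proof.
  intros u v n Hc Hp.
  pose proof (run_inv u v n) as [H1 H2].
  rewrite run_spec in H1, H2. cbn [fst snd] in H1, H2.
  rewrite Hc, Hp in H1, H2.
  pose proof (fin1_ok _ _ H1). lia.
Qed.

Lemma key_top : forall u v n,
  prevu u n = S0 -> fst (fst (phirun u n)) <> None -> fst (fst (phirun v n)) = None ->
  3 <= 2 * gcount u v n + snd (phirun v n) - snd (phirun u n).
Proof.
  intros u v n Hp Hu Hv.
  pose proof (run_inv u v n) as [H1 H2].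
  rewrite run_spec in H1, H2. cbn [fst snd] in H1, H2. rewrite Hp in H1, H2.
  destruct (phirun u n) as [[lu gu] a]. destruct (phirun v n) as [[lv gv] b].
  cbn [fst snd] in *. destruct lu as [lu|]; [|congruence]. subst lv.
  pose proof (fin3_ok _ _ _ _ H1). eapply Z.le_trans; [exact H | exact H2].
Qed.

Lemma connf_intro : forall u v n x, (x < n)%nat ->
  nz (v x) && (nz (prevu u x) || nz (u x)) = true -> connf u v n = true.
Proof.
  intros u v n x Hx H. induction n as [|n IH]; [lia|].
  simpl. destruct (Nat.eq_dec x n).
  - subst. rewrite H. apply orb_true_r.
  - rewrite IH by lia. reflexivity.
Qed.

Lemma phirun_zero : forall v n, (forall x, (x < n)%nat -> v x = S0) ->
  phirun v n = ((None, false), 0).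
Proof.
  intros v n H. induction n as [|n IH]; [reflexivity|].
  simpl. rewrite IH by (intros; apply H; lia). rewrite H by lia. reflexivity.
Qed.

Lemma phirun_some : forall u n x, (x < n)%nat -> u x <> S0 ->
  fst (fst (phirun u n)) <> None.
Proof.
  intros u n x Hx H. induction n as [|n IH]; [lia|].
  simpl. destruct (Nat.eq_dec x n).
  - subst. destruct (u n); [congruence| |]; simpl; congruence.
  - assert (IH' := IH ltac:(lia)).
    destruct (phirun u n) as [[l g] a]. simpl in *.
    destruct l; [|congruence]. destruct (u n); simpl; congruence.
Qed.

Lemma phirun_last0 : forall u n, u n = S0 -> snd (phirun u (S n)) = snd (phirun u n).
Proof.
  intros u n H. simpl. rewrite H. destruct (phirun u n) as [[[l|] g] a]; simpl; ring.
Qed.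


Definition symb (s t : sym) : bool := match s, t with S0,S0|SP,SP|SN,SN => true | _,_ => false end.
Lemma symb_iff : forall s t, symb s t = true <-> s = t.
Proof. intros [] []; simpl; split; congruence. Qed.
Lemma In_memb : forall s l, In s l <-> existsb (symb s) l = true.
Proof.
  intros s l; induction l as [|a l IH]; simpl; [split; [tauto|discriminate]|].
  rewrite orb_true_iff, IH, symb_iff. split; intros [H|H]; auto.
Qed.

Lemma nodeb_iff : forall x y z : sym,
  (exists S : list sym, In S [[SP]; [SN]; [S0; SP]; [S0; SN]] /\
    forall s, In s [x; y; z] <-> In s S) <-> nodeb x y z = true.
Proof.
  intros x y z; split.
  - intros [S [HS Hiff]].
    pose proof (Hiff S0) as H0; pose proof (Hiff SP) as HP; pose proof (Hiff SN) as HN.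
    rewrite !In_memb in H0, HP, HN.
    simpl in HS; destruct HS as [<-|[<-|[<-|[<-|[]]]]];
    destruct x, y, z; simpl in *; try reflexivity; exfalso;
    apply eq_iff_eq_true in H0, HP, HN;
    first [discriminate H0 | discriminate HP | discriminate HN].
  - intro H.
    assert (G : forall S, (forall s, existsb (symb s) [x;y;z] = existsb (symb s) S) ->
       In S [[SP]; [SN]; [S0; SP]; [S0; SN]] ->
       exists S : list sym, In S [[SP]; [SN]; [S0; SP]; [S0; SN]] /\
         forall s, In s [x; y; z] <-> In s S).
    { intros S HS HI. exists S. split; [exact HI|]. intro s. rewrite !In_memb, HS. tauto. }
    destruct x, y, z; simpl in H; try discriminate H;
    first [ solve [apply (G [SP]); [intros []; reflexivity | simpl; tauto]]
          | solve [apply (G [SN]); [intros []; reflexivity | simpl; tauto]]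
          | solve [apply (G [S0; SP]); [intros []; reflexivity | simpl; tauto]]
          | solve [apply (G [S0; SN]); [intros []; reflexivity | simpl; tauto]] ].
Qed.


Definition ptn (s x : nat) : pt := (Z.of_nat x, Z.of_nat s - Z.of_nat x).
Definition rowf (D : pt -> sym) (s : nat) (x : nat) : sym := D (ptn s x).
Definition nodeP (D : pt -> sym) (a : pt) : bool :=
  nodeb (D a) (D (fst a - 1, snd a)) (D (fst a, snd a - 1)).

Lemma is_node_iff D a : is_node D a <-> nodeP D a = true.
Proof. unfold is_node, nodeP, E. simpl map. apply nodeb_iff. Qed.

Lemma nz_true c : c <> S0 -> nz c = true.
Proof. destruct c; simpl; congruence. Qed.

Fixpoint cnt (D : pt -> sym) (s n : nat) : nat :=
  match n with O => O | S m => (cnt D s m + (if nodeP D (ptn s m) then 1 else 0))%nat end.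

Section Geo.
Variable D : pt -> sym.
Variable kn : nat.
Hypothesis Hz : forall m, (fst m < 0 \/ snd m < 0 \/ Z.of_nat kn < fst m + snd m) -> D m = S0.

Lemma Hpos m : D m <> S0 -> 0 <= fst m /\ 0 <= snd m /\ fst m + snd m <= Z.of_nat kn.
Proof.
  intro H. destruct (Z_lt_le_dec (fst m) 0); [exfalso; apply H, Hz; lia|].
  destruct (Z_lt_le_dec (snd m) 0); [exfalso; apply H, Hz; lia|].
  destruct (Z_lt_le_dec (Z.of_nat kn) (fst m + snd m)); [exfalso; apply H, Hz; lia|].
  lia.
Qed.

Lemma cnt_gcount t n : Z.of_nat (cnt D (S t) n) = gcount (rowf D t) (rowf D (S t)) n.
Proof.
  induction n as [|n IH]; [reflexivity|].
  cbn [cnt gcount]. rewrite Nat2Z.inj_add, IH. f_equal.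
  assert (E : nodeP D (ptn (S t) n) = nodeb (rowf D (S t) n) (prevu (rowf D t) n) (rowf D t n)).
  { unfold nodeP, rowf, ptn. cbn [fst snd]. f_equal.
    - destruct n as [|y]; simpl prevu.
      + apply Hz. simpl. lia.
      + f_equal. f_equal; lia.
    - f_equal. f_equal; lia. }
  rewrite E. destruct (nodeb _ _ _); reflexivity.
Qed.

Lemma cross t : forall p q,
  clos_refl_trans pt (fun x y => support D x /\ support D y /\ adjacent x y) p q ->
  fst p + snd p <= Z.of_nat t -> Z.of_nat t < fst q + snd q ->
  exists m, D m <> S0 /\ fst m + snd m = Z.of_nat t /\
    (D (fst m + 1, snd m) <> S0 \/ D (fst m, snd m + 1) <> S0).
Proof.
  intros p q H. apply clos_rt_rt1n in H.
  induction H as [x | x y z Hxy Hyz IH]; intros H1 H2; [lia|].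
  destruct (Z_le_gt_dec (fst y + snd y) (Z.of_nat t)) as [Hle|Hgt]; [apply IH; lia|].
  destruct Hxy as [Sx [Sy [_ Hin]]].
  destruct y as [y1 y2]. cbn [fst snd] in *.
  simpl in Hin.
  destruct Hin as [H|[H|[H|[H|[H|[H|[]]]]]]]; injection H as Ha Hb; try lia.
  - exists x. split; [exact Sx|]. split; [lia|]. left.
    replace (fst x + 1, snd x) with (y1, y2) by (f_equal; lia). exact Sy.
  - exists x. split; [exact Sx|]. split; [lia|]. right.
    replace (fst x, snd x + 1) with (y1, y2) by (f_equal; lia). exact Sy.
Qed.

Definition P (s : nat) : Z := snd (phirun (rowf D s) (S s)).

Lemma rowf_last t : rowf D t (S t) = S0.
Proof. unfold rowf, ptn. apply Hz. simpl. lia. Qed.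

Lemma level_ineq t (mt : pt) :
  connected_support D -> D (0,0) <> S0 -> D mt <> S0 -> fst mt + snd mt = Z.of_nat kn ->
  (S t <= kn)%nat ->
  1 <= 2 * Z.of_nat (cnt D (S t) (S (S t))) + P (S t) - P t.
Proof.
  intros Hcon H0 Hmt Hlev Ht.
  rewrite cnt_gcount. unfold P.
  rewrite <- (phirun_last0 (rowf D t) (S t) (rowf_last t)).
  apply key_step; [| apply rowf_last].
  assert (Ha : fst (0,0) + snd (0,0) <= Z.of_nat t) by (simpl; lia).
  assert (Hb : Z.of_nat t < fst mt + snd mt) by lia.
  destruct (cross t (0,0) mt (Hcon _ _ H0 Hmt) Ha Hb) as [m [Hm [Hml Hor]]].
  destruct (Hpos m Hm) as [Hm1 [Hm2 _]].
  set (x0 := Z.to_nat (fst m)).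
  assert (Pm : ptn t x0 = m) by (destruct m; unfold ptn, x0; cbn [fst snd] in *; f_equal; lia).
  destruct Hor as [Ho|Ho].
  - apply (connf_intro _ _ _ (S x0)); [unfold x0; lia|].
    simpl prevu. unfold rowf. rewrite Pm, (nz_true _ Hm), orb_true_l, andb_true_r.
    apply nz_true.
    replace (ptn (S t) (S x0)) with (fst m + 1, snd m); [exact Ho|].
    destruct m; unfold ptn, x0; cbn [fst snd] in *; f_equal; lia.
  - apply (connf_intro _ _ _ x0); [unfold x0; lia|].
    change (rowf D t x0) with (D (ptn t x0)). rewrite Pm, (nz_true _ Hm), orb_true_r, andb_true_r.
    apply nz_true. unfold rowf.
    replace (ptn (S t) x0) with (fst m, snd m + 1); [exact Ho|].
    destruct m; unfold ptn, x0; cbn [fst snd] in *; f_equal; lia.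
Qed.

Lemma top_ineq (mt : pt) : D mt <> S0 -> fst mt + snd mt = Z.of_nat kn ->
  3 <= 2 * Z.of_nat (cnt D (S kn) (S (S kn))) - P kn.
Proof.
  intros Hmt Hlev.
  rewrite cnt_gcount. unfold P.
  rewrite <- (phirun_last0 (rowf D kn) (S kn) (rowf_last kn)).
  assert (Hv : phirun (rowf D (S kn)) (S (S kn)) = ((None, false), 0)).
  { apply phirun_zero. intros x _. unfold rowf, ptn. apply Hz. cbn [fst snd]. lia. }
  pose proof (key_top (rowf D kn) (rowf D (S kn)) (S (S kn)) (rowf_last kn)) as K.
  rewrite Hv in K. cbn [fst snd] in K.
  destruct (Hpos mt Hmt) as [Hm1 [Hm2 _]].
  assert (Hs : fst (fst (phirun (rowf D kn) (S (S kn)))) <> None).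
  { apply (phirun_some _ _ (Z.to_nat (fst mt))); [lia|].
    unfold rowf. replace (ptn kn (Z.to_nat (fst mt))) with mt; [exact Hmt|].
    destruct mt; unfold ptn; cbn [fst snd] in *; f_equal; lia. }
  specialize (K Hs eq_refl). lia.
Qed.

End Geo.


Fixpoint tot (D : pt -> sym) (j : nat) : nat :=
  match j with O => cnt D 0 1 | S j' => (tot D j' + cnt D (S j') (S (S j')))%nat end.

Definition row_nodes (D : pt -> sym) (s : nat) : list pt :=
  map (ptn s) (filter (fun x => nodeP D (ptn s x)) (seq 0 (S s))).
Fixpoint NL (D : pt -> sym) (j : nat) : list pt :=
  match j with O => row_nodes D 0 | S j' => NL D j' ++ row_nodes D (S j') end.

Lemma len_filter D s n : length (filter (fun x => nodeP D (ptn s x)) (seq 0 n)) = cnt D s n.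
Proof.
  induction n as [|n IH]; [reflexivity|].
  rewrite seq_S, filter_app, length_app, IH. simpl.
  destruct (nodeP D (ptn s n)); reflexivity.
Qed.

Lemma len_NL D j : length (NL D j) = tot D j.
Proof.
  induction j as [|j IH]; simpl.
  - unfold row_nodes. rewrite length_map, len_filter. reflexivity.
  - rewrite length_app, IH. unfold row_nodes. rewrite length_map, len_filter. reflexivity.
Qed.

Lemma row_in D s a : In a (row_nodes D s) <->
  exists x, (x <= s)%nat /\ a = ptn s x /\ nodeP D (ptn s x) = true.
Proof.
  unfold row_nodes. rewrite in_map_iff. split.
  - intros [x [<- Hx]]. apply filter_In in Hx. destruct Hx as [Hx1 Hx2].
    apply in_seq in Hx1. exists x. split; [lia|]. auto.
  - intros [x [Hx [-> Hn]]]. exists x. split; [reflexivity|].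
    apply filter_In. split; [apply in_seq; lia| exact Hn].
Qed.

Lemma NL_in D j a : In a (NL D j) <-> exists s, (s <= j)%nat /\ In a (row_nodes D s).
Proof.
  induction j as [|j IH]; simpl.
  - split; [intro H; exists O; split; [lia|exact H]|].
    intros [s [Hs H]]. replace s with O in H by lia. exact H.
  - rewrite in_app_iff, IH. split.
    + intros [[s [Hs H]]|H]; [exists s; split; [lia|exact H]|exists (S j); split; [lia|exact H]].
    + intros [s [Hs H]]. destruct (Nat.eq_dec s (S j)) as [->|Hne]; [right; exact H|].
      left. exists s. split; [lia|exact H].
Qed.

Lemma row_lev D s a : In a (row_nodes D s) -> fst a + snd a = Z.of_nat s.
Proof. rewrite row_in. intros [x [_ [-> _]]]. unfold ptn. simpl. lia. Qed.

Lemma NoDup_NL D j : NoDup (NL D j).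
Proof.
  assert (Hr : forall s, NoDup (row_nodes D s)).
  { intro s. unfold row_nodes. apply Injective_map_NoDup.
    - intros x y H. unfold ptn in H. injection H as H. lia.
    - apply NoDup_filter, seq_NoDup. }
  induction j as [|j IH]; simpl; [apply Hr|].
  apply NoDup_app; [exact IH| apply Hr|].
  intros a H1 H2. apply NL_in in H1. destruct H1 as [s [Hs H1]].
  apply row_lev in H1. apply row_lev in H2. lia.
Qed.

Section Fin.
Variable D : pt -> sym.
Variable kn : nat.
Hypothesis Hz : forall m, (fst m < 0 \/ snd m < 0 \/ Z.of_nat kn < fst m + snd m) -> D m = S0.
Hypothesis Hcon : connected_support D.
Hypothesis H0 : D (0,0) <> S0.
Variable mt : pt.
Hypothesis Hmt : D mt <> S0.
Hypothesis Hlev : fst mt + snd mt = Z.of_nat kn.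

Lemma base : cnt D 0 1 = 1%nat /\ P D 0 = 1.
Proof.
  unfold P, cnt, nodeP, rowf, ptn. simpl.
  rewrite (Hz (-1, 0)) by (simpl; lia). rewrite (Hz (0, -1)) by (simpl; lia).
  destruct (D (0,0)); [congruence | |]; split; reflexivity.
Qed.

Lemma chain j : (j <= kn)%nat -> 3 + Z.of_nat j <= 2 * Z.of_nat (tot D j) + P D j.
Proof.
  induction j as [|j IH]; intro Hj.
  - change (tot D 0) with (cnt D 0 1). destruct base as [Hb1 Hb2]. rewrite Hb1, Hb2. simpl. lia.
  - pose proof (level_ineq D kn Hz j mt Hcon H0 Hmt Hlev Hj).
    specialize (IH ltac:(lia)). cbn [tot]. rewrite Nat2Z.inj_add. lia.
Qed.

Lemma total : Z.of_nat kn + 6 <= 2 * Z.of_nat (tot D (S kn)).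
Proof.
  pose proof (chain kn (le_n _)). pose proof (top_ineq D kn Hz mt Hmt Hlev).
  cbn [tot]. rewrite Nat2Z.inj_add. lia.
Qed.

Lemma nodes_ok : num_nodes D (tot D (S kn)).
Proof.
  exists (NL D (S kn)). split; [apply NoDup_NL|]. split; [|apply len_NL].
  intro a. rewrite is_node_iff, NL_in. split.
  - intro Hn. destruct a as [a1 a2].
    assert (Hb : 0 <= a1 /\ 0 <= a2 /\ a1 + a2 <= Z.of_nat kn + 1).
    { unfold nodeP in Hn. cbn [fst snd] in Hn.
      destruct (D (a1, a2)) eqn:E1.
      - destruct (D (a1 - 1, a2)) eqn:E2.
        + destruct (D (a1, a2 - 1)) eqn:E3; [discriminate Hn| |];
          destruct (Hpos D kn Hz (a1, a2 - 1)) as [? [? ?]]; try congruence; cbn [fst snd] in *; lia.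
        + destruct (Hpos D kn Hz (a1 - 1, a2)) as [? [? ?]]; try congruence; cbn [fst snd] in *; lia.
        + destruct (Hpos D kn Hz (a1 - 1, a2)) as [? [? ?]]; try congruence; cbn [fst snd] in *; lia.
      - destruct (Hpos D kn Hz (a1, a2)) as [? [? ?]]; try congruence; cbn [fst snd] in *; lia.
      - destruct (Hpos D kn Hz (a1, a2)) as [? [? ?]]; try congruence; cbn [fst snd] in *; lia. }
    exists (Z.to_nat (a1 + a2)). split; [lia|].
    apply row_in. exists (Z.to_nat a1). split; [lia|].
    assert (Ea : (a1, a2) = ptn (Z.to_nat (a1 + a2)) (Z.to_nat a1)) by (unfold ptn; f_equal; lia).
    rewrite <- Ea. split; [reflexivity|exact Hn].
  - intros [s [_ H]]. apply row_in in H. destruct H as [x [_ [-> Hn]]]. exact Hn.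
Qed.

End Fin.


Theorem mainTheorem5 (D : pt -> sym) (d : Z) :
  newton_diagram D ->
  support_size D d ->
  connected_support D ->
  support D (0, 0) ->
  exists n : nat, num_nodes D n /\ d + 5 <= 2 * Z.of_nat n.
Proof.
  intros [_ [_ Hnn]] [k [a1 [a2 [[[mt [Hmt Hmtl]] Hk] [[[m1 [Hm1 Em1]] Ha1] [[[m2 [Hm2 Em2]] Ha2] Hd]]]]]] Hcon H0.
  pose proof (Hnn _ Hm1). pose proof (Hnn _ Hm2). pose proof (Ha1 _ H0). pose proof (Ha2 _ H0).
  pose proof (Hk _ H0). cbn [fst snd] in *.
  assert (a1 = 0) by lia. assert (a2 = 0) by lia. subst a1 a2.
  set (kn := Z.to_nat k).
  assert (Ek : k = Z.of_nat kn) by (unfold kn; lia).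
  assert (Hz : forall m, (fst m < 0 \/ snd m < 0 \/ Z.of_nat kn < fst m + snd m) -> D m = S0).
  { intros m Hm. destruct (D m) eqn:E; [reflexivity| |];
    (assert (Hs : support D m) by (unfold support; congruence);
     pose proof (Hnn _ Hs); pose proof (Hk _ Hs); lia). }
  assert (Hl : fst mt + snd mt = Z.of_nat kn) by lia.
  exists (tot D (S kn)). split.
  - eapply nodes_ok; eauto.
  - pose proof (total D kn Hz Hcon H0 mt Hmt Hl). lia.
Qed.
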